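(* Let $r\ge 1$ and let $q_1\le\cdots\le q_r$ be positive even integers. Let $G=\Theta_{1,q_1,\ldots,q_r}$. If $p\ge\max\{4,\Delta(G)\}$, then $G$ is strongly $p$-edge-orientable.
   Context: For positive integers $p_1,\ldots,p_k$, the $\Theta$-graph $\Theta_{p_1,\ldots,p_k}$ is the graph obtained from two vertices $x_1,x_2$ joined by $k$ internally disjoint paths, the $i$th path having $p_i$ edges. A path with $1$ edge is the edge $x_1x_2$. An orientation of a graph $H$ is any digraph obtained by replacing each edge $uv$ with the arc $(u,v)$, with the arc $(v,u)$, or with both arcs. A kernel of a digraph $D$ is an independent set $S$ such that every vertex of $D-S$ has an out-neighbor in $S$. $D$ is kernel-perfect if every induced subdigraph of $D$ has a kernel. For $f:V(H)\to\mathbb{N}$, an orientation $D$ of $H$ is $f$-kernel-perfect if it is kernel-perfect and $f(v)\ge 1+d^+_D(v)$ for all $v$. For $f:E(G)\to\mathbb{N}$, $G$ is $f$-edge-orientable if its line graph $L(G)$ admits an $f$-kernel-perfect orientation. For $v\in V(G)$, define $f_{k,v}:E(G)\to\mathbb{N}$ by $f_{k,v}(e)=d_G(v)$ if $e$ is incident to $v$, and $f_{k,v}(e)=k$ otherwise. $G$ is strongly $k$-edge-orientable if $G$ is $f_{k,v}$-edge-orientable for every $v\in V(G)$. *)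

(* Defs.v *)
From HB Require Import structures.
From mathcomp Require Import all_boot.
Set Implicit Arguments.
Unset Strict Implicit.
Unset Printing Implicit Defensive.

(* A (multi)graph given by a finite vertex type V, a finite edge type E and
   the endpoint map [ends : E -> V * V]. *)
Definition incident (V E : finType) (ends : E -> V * V) (v : V) (e : E) : bool :=
  ((ends e).1 == v) || ((ends e).2 == v).

Definition degree (V E : finType) (ends : E -> V * V) (v : V) : nat :=
  #|[set e | incident ends v e]|.

Definition maxdeg (V E : finType) (ends : E -> V * V) : nat :=
  \max_(v : V) degree ends v.

Definition line_adj (V E : finType) (ends : E -> V * V) : rel E :=
  fun e f => (e != f) && [exists v, incident ends v e && incident ends v f].

Definition is_orientation (T : finType) (adj : rel T) (D : rel T) : Prop :=
  (forall u v, D u v -> adj u v) /\ (forall u v, adj u v -> D u v || D v u).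

Definition is_kernel_of (T : finType) (D : rel T) (S K : {set T}) : Prop :=
  [/\ K \subset S,
      (forall x y, x \in K -> y \in K -> ~~ D x y) &
      (forall x, x \in S :\: K -> exists y, y \in K /\ D x y)].

Definition kernel_perfect (T : finType) (D : rel T) : Prop :=
  forall S : {set T}, exists K : {set T}, is_kernel_of D S K.

Definition outdeg (T : finType) (D : rel T) (v : T) : nat := #|[set u | D v u]|.

Definition f_kernel_perfect_orientation (T : finType) (adj : rel T)
    (f : T -> nat) (D : rel T) : Prop :=
  [/\ is_orientation adj D, kernel_perfect D & forall v, 1 + outdeg D v <= f v].

Definition f_edge_orientable (V E : finType) (ends : E -> V * V) (f : E -> nat) : Prop :=
  exists D : rel E, f_kernel_perfect_orientation (line_adj ends) f D.

Definition f_kv (V E : finType) (ends : E -> V * V) (k : nat) (v : V) : E -> nat :=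
  fun e => if incident ends v e then degree ends v else k.

Definition strongly_edge_orientable (V E : finType) (ends : E -> V * V) (k : nat) : Prop :=
  forall v : V, f_edge_orientable ends (f_kv ends k v).

(* The Theta graph Theta_{1, q_0, ..., q_{r-1}}.
   Vertices: inl false = x1, inl true = x2, inr (i, m) = the (m+1)-th
   internal vertex of the i-th path (which has q i edges). *)
Definition theta_vert (r : nat) (q : 'I_r -> nat) : finType :=
  (bool + {i : 'I_r & 'I_(q i).-1})%type.

(* k-th vertex (0 <= k <= q i) along path i *)
Definition theta_pv (r : nat) (q : 'I_r -> nat) (i : 'I_r) (k : nat) : theta_vert q :=
  if k == 0 then inl false
  else if k == q i then inl true
  else match (insub k.-1 : option 'I_(q i).-1) with
       | Some o => inr (existT (fun j => 'I_(q j).-1) i o)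
       | None => inl true
       end.

(* Edges: inl tt = the edge x1x2 (path of length 1), inr (i, j) = the j-th edge
   of path i, joining its j-th and (j+1)-th vertices. *)
Definition theta_edge (r : nat) (q : 'I_r -> nat) : finType :=
  (unit + {i : 'I_r & 'I_(q i)})%type.

Arguments theta_pv {r} q i k.
Definition theta_ends (r : nat) (q : 'I_r -> nat) (e : theta_edge q)
  : theta_vert q * theta_vert q :=
  match e with
  | inl _ => (inl false, inl true)
  | inr (existT i j) => (theta_pv q i j, theta_pv q i j.+1)
  end.
Arguments theta_ends {r} q e.

(* Main.v *)
Require Import Defs.
From HB Require Import structures.
From mathcomp Require Import all_boot zify.
Set Implicit Arguments.
Unset Strict Implicit.
Unset Printing Implicit Defensive.

Section Kernel.
Variable T : finType.
Variable D : rel T.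

Lemma semikernel_ext (S A : {set T}) :
  (forall S' : {set T}, #|S'| < #|S| -> exists K, is_kernel_of D S' K) ->
  A \subset S -> A != set0 ->
  (forall x y, x \in A -> y \in A -> ~~ D x y) ->
  (forall a y, a \in A -> y \in S -> D a y -> exists2 a', a' \in A & D y a') ->
  exists K, is_kernel_of D S K.
Proof.
move=> IH sAS nA indA semi.
set S' := [set y in S | (y \notin A) && ~~ [exists a in A, D y a]].
have ltS : #|S'| < #|S|.
  apply: proper_card; rewrite properEneq; apply/andP; split.
    apply/eqP=> E; case/set0Pn: nA => a aA.
    have : a \in S' by rewrite E (subsetP sAS).
    by rewrite inE aA /= andbF.
  by apply/subsetP=> y; rewrite inE => /andP[].
have [K' [sK' indK' domK']] := IH S' ltS.
exists (A :|: K'); split.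
- rewrite subUset sAS /=; apply: subset_trans sK' _.
  by apply/subsetP=> y; rewrite inE => /andP[].
- move=> x y; rewrite !inE => /orP[xA|xK] /orP[yA|yK].
  + exact: indA.
  + apply/negP=> Dxy.
    have yS : y \in S by move/subsetP: sK' => /(_ y yK); rewrite inE => /andP[].
    have [a' a'A Dya'] := semi x y xA yS Dxy.
    move/subsetP: sK' => /(_ y yK); rewrite inE => /and3P[_ _ /existsP []].
    by exists a'; rewrite a'A.
  + apply/negP=> Dxy.
    move/subsetP: sK' => /(_ x xK); rewrite inE => /and3P[_ _ /existsP []].
    by exists y; rewrite yA.
  + exact: indK'.
- move=> x; rewrite !inE negb_or => /andP[/andP[xA xK] xS].
  case: (boolP [exists a in A, D x a]) => [/existsP[a /andP[aA Dxa]]|nex].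
    by exists a; rewrite inE aA.
  have xS' : x \in S' :\: K' by rewrite !inE xK xS xA nex.
  have [y [yK Dxy]] := domK' x xS'.
  by exists y; rewrite inE yK orbT.
Qed.

Lemma kp_rank (rho : T -> nat) (col : T -> bool) :
  (forall u w, D u w -> rho w < rho u \/ (rho w = rho u /\ col w != col u)) ->
  kernel_perfect D.
Proof.
move=> cert S.
move: {2}#|S| (leqnn #|S|) => n; elim: n S => [|n IHn] S.
  rewrite leqn0 cards_eq0 => /eqP->; exists set0; split.
  - exact: sub0set.
  - by move=> x y; rewrite inE.
  - by move=> x; rewrite !inE andbF.
move=> leS.
have IH : forall S' : {set T}, #|S'| < #|S| -> exists K, is_kernel_of D S' K.
  by move=> S' lt; apply: IHn; rewrite -ltnS (leq_trans lt leS).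
case: (set_0Vmem S) => [->|[x0 x0S]].
  exists set0; split.
  - exact: sub0set.
  - by move=> x y; rewrite inE.
  - by move=> x; rewrite !inE andbF.
have [x xS xmin] : exists2 x, x \in S & forall y, y \in S -> rho x <= rho y.
  case: (arg_minnP rho x0S) => x xS xm; by exists x.
set C := [set y in S | rho y == rho x].
have Cout : forall y z, y \in C -> z \in S -> D y z -> z \in C /\ col z != col y.
  move=> y z; rewrite inE => /andP[yS /eqP ry] zS Dyz.
  case: (cert _ _ Dyz) => [lt|[eq ne]].
    by have := xmin z zS; rewrite -ry leqNgt lt.
  by rewrite inE zS eq ry eqxx.
case: (boolP [exists y in C, ~~ [exists z in S, D y z]]).
  case/existsP=> y /andP[yC /existsPn nz].
  have yS : y \in S by move: yC; rewrite inE => /andP[].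
  apply: (@semikernel_ext S [set y] IH).
  - by rewrite sub1set.
  - by apply/set0Pn; exists y; rewrite inE.
  - move=> a b; rewrite !inE => /eqP-> /eqP->.
    by have := nz y; rewrite yS.
  - move=> a b; rewrite inE => /eqP-> bS Dyb.
    by have := nz b; rewrite bS Dyb.
move/existsPn=> hall.
have xC : x \in C by rewrite inE xS eqxx.
apply: (@semikernel_ext S [set y in C | col y == col x] IH).
- apply/subsetP=> y; rewrite !inE => /andP[/andP[]] //.
- by apply/set0Pn; exists x; rewrite !inE xS !eqxx.
- move=> a b /setIdP[aC /eqP ca] /setIdP[bC /eqP cb].
  apply/negP=> Dab.
  have bS : b \in S by move: bC; rewrite inE => /andP[].
  have [_] := Cout a b aC bS Dab.
  by rewrite ca cb eqxx.
- move=> a y /setIdP[aC /eqP ca] yS Day.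
  have [yC cy] := Cout a y aC yS Day.
  have := hall y; rewrite yC /= negbK => /existsP[z /andP[zS Dyz]].
  have [zC cz] := Cout y z yC zS Dyz.
  exists z => //; apply/setIdP; split=> //.
  by move: cy cz; rewrite ca; case: (col x); case: (col y); case: (col z).
Qed.
End Kernel.

Section Theta.
Variables (r : nat) (q : 'I_r -> nat).
Hypothesis q2 : forall i, 1 < q i.
Hypothesis qe : forall i, ~~ odd (q i).
Local Notation E := (theta_edge q).
Local Notation V := (theta_vert q).
Local Notation ends := (theta_ends q).
Local Notation pv := (theta_pv q).
Local Notation adj := (line_adj (theta_ends q)).

Definition e0 : E := inl tt.
Definition ed (i : 'I_r) (j : 'I_(q i)) : E := inr (existT (fun k => 'I_(q k)) i j).
Definition vx (i : 'I_r) (o : 'I_(q i).-1) : V := inr (existT (fun k => 'I_(q k).-1) i o).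

Lemma pv0 i : pv i 0 = inl false. Proof. by []. Qed.
Lemma pvq i : pv i (q i) = inl true.
Proof. by rewrite /theta_pv eqxx; have := q2 i; case: (q i). Qed.
Lemma pv_mid i (o : 'I_(q i).-1) : pv i o.+1 = vx o.
Proof.
rewrite /theta_pv /=.
have ho := ltn_ord o.
have -> : (o.+1 == q i) = false by apply/eqP; lia.
rewrite insubT /vx; congr (inr (existT _ _ _)); exact: val_inj.
Qed.

Lemma pv_cases i a : a <= q i ->
  [\/ a = 0, a = q i | exists o : 'I_(q i).-1, a = o.+1].
Proof.
move=> ha; case: (posnP a) => [->|a0]; first by constructor 1.
case: (eqVneq a (q i)) => [->|aq]; first by constructor 2.
have h : a.-1 < (q i).-1 by lia.
constructor 3; exists (Ordinal h) => /=; lia.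
Qed.

Lemma vx_inj i i' (o : 'I_(q i).-1) (o' : 'I_(q i').-1) : vx o = vx o' -> i = i' /\ (o : nat) = o'.
Proof.
move=> h; split.
  by have := f_equal (fun x : V => if x is inr y then val (tag y) else 0) h => /= /val_inj.
by have := f_equal (fun x : V => if x is inr y then val (tagged y) else 0) h.
Qed.

Lemma pv_eq i i' a b : a <= q i -> b <= q i' -> pv i a = pv i' b ->
  (a = 0 /\ b = 0) \/ (a = q i /\ b = q i') \/ (i = i' /\ a = b).
Proof.
move=> ha hb.
case: (pv_cases ha) => [->|->|[o ->]]; case: (pv_cases hb) => [->|->|[o' ->]];
  rewrite ?pv0 ?pvq ?pv_mid //; try by [left|right;left].
by move/vx_inj=> [ii oo]; right; right; split=> //; rewrite oo.
Qed.

Lemma ed_eq i i' (j : 'I_(q i)) (j' : 'I_(q i')) :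
  (ed j == ed j') = (i == i') && ((j : nat) == j').
Proof.
apply/eqP/andP.
  move=> h; split.
    by have := f_equal (fun x : E => if x is inr y then val (tag y) else 0) h => /= /val_inj ->.
  by have := f_equal (fun x : E => if x is inr y then val (tagged y) else 0) h => /= ->.
case=> /eqP ii /eqP jj; subst i'; congr (inr (existT _ _ _)); exact: val_inj.
Qed.

Definition adjP (i : 'I_r) (j : nat) (i' : 'I_r) (j' : nat) : bool :=
  ((i != i') && (((j == 0) && (j' == 0)) || ((j.+1 == q i) && (j'.+1 == q i'))))
  || ((i == i') && ((j.+1 == j') || (j'.+1 == j))).

Lemma ends_ed i (j : 'I_(q i)) : ends (ed j) = (pv i j, pv i j.+1).
Proof. by []. Qed.

Lemma adj_ed i i' (j : 'I_(q i)) (j' : 'I_(q i')) :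
  adj (ed j) (ed j') = adjP i j i' j'.
Proof.
rewrite /line_adj /incident ed_eq !ends_ed /=.
have hj := ltn_ord j; have hj' := ltn_ord j'.
apply/andP/idP.
  case=> ne /existsP[z /andP[h1 h2]].
  have key : forall a b, a <= q i -> b <= q i' -> pv i a = z -> pv i' b = z ->
      (a = 0 /\ b = 0) \/ (a = q i /\ b = q i') \/ (i = i' /\ a = b).
    by move=> a b ha hb <- hb'; apply: pv_eq => //; rewrite hb'.
  rewrite /adjP.
  case: (eqVneq i i') ne => [ii|ii] ne.
    subst i'; rewrite /= in ne *.
    case/orP: h1 => /eqP h1; case/orP: h2 => /eqP h2.
    - case: (key _ _ (ltnW hj) (ltnW hj') h1 h2); lia.
    - case: (key _ _ (ltnW hj) hj' h1 h2); lia.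
    - case: (key _ _ hj (ltnW hj') h1 h2); lia.
    - case: (key _ _ hj hj' h1 h2); lia.
  rewrite /=.
  case/orP: h1 => /eqP h1; case/orP: h2 => /eqP h2.
  - case: (key _ _ (ltnW hj) (ltnW hj') h1 h2) => [|[|[e]]]; [lia|lia|by rewrite e eqxx in ii].
  - case: (key _ _ (ltnW hj) hj' h1 h2) => [|[|[e]]]; [lia|lia|by rewrite e eqxx in ii].
  - case: (key _ _ hj (ltnW hj') h1 h2) => [|[|[e]]]; [lia|lia|by rewrite e eqxx in ii].
  - case: (key _ _ hj hj' h1 h2) => [|[|[e]]]; [lia|lia|by rewrite e eqxx in ii].
rewrite /adjP; case: (eqVneq i i') => [ii|ii] /=.
  subst i'; rewrite ?eqxx /= => /orP[] /eqP e; split; try lia.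
    by apply/existsP; exists (pv i j'); rewrite -e !eqxx orbT.
  by apply/existsP; exists (pv i j); rewrite e !eqxx orbT.
rewrite orbF => /orP[] /andP[/eqP a /eqP b]; split=> //.
  by apply/existsP; exists (inl false); rewrite a b !pv0 !eqxx.
by apply/existsP; exists (inl true); rewrite a b !pvq !eqxx ?orbT.
Qed.

Lemma adj_e0 i (j : 'I_(q i)) : adj e0 (ed j) = ((j : nat) == 0) || ((j : nat).+1 == q i).
Proof.
rewrite /line_adj /incident.
have -> : (e0 != ed j) = true by [].
rewrite /=.
have hj := ltn_ord j.
apply/existsP/idP.
  case=> z /andP[h1 /orP[/eqP h2|/eqP h2]].
    case/orP: h1 => /eqP h1; rewrite -h1 {z h1} in h2.
      by case: (pv_cases (ltnW hj)) h2 => [e|e|[o e]]; rewrite e ?pv0 ?pvq ?pv_mid //; lia.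
    by case: (pv_cases (ltnW hj)) h2 => [e|e|[o e]]; rewrite e ?pv0 ?pvq ?pv_mid //; lia.
  case/orP: h1 => /eqP h1; rewrite -h1 {z h1} in h2.
    by case: (pv_cases hj) h2 => [e|e|[o e]]; rewrite e ?pv0 ?pvq ?pv_mid //; lia.
  by case: (pv_cases hj) h2 => [e|e|[o e]]; rewrite e ?pv0 ?pvq ?pv_mid //; lia.
case/orP=> /eqP e.
  by exists (inl false); rewrite e pv0 !eqxx.
by exists (inl true); rewrite e pvq !eqxx !orbT.
Qed.

Lemma adj_sym : symmetric adj.
Proof.
move=> e f; rewrite /line_adj eq_sym; congr (_ && _).
apply/existsP/existsP=> [][z /andP[a b]]; exists z; exact/andP.
Qed.

Lemma adj_e0' i (j : 'I_(q i)) : adj (ed j) e0 = ((j : nat) == 0) || ((j : nat).+1 == q i).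
Proof. by rewrite adj_sym adj_e0. Qed.

Lemma adj_e00 : adj e0 e0 = false.
Proof. by rewrite /line_adj eqxx. Qed.


Lemma inc_ed z i (j : 'I_(q i)) : incident ends z (ed j) = (pv i j == z) || (pv i j.+1 == z).
Proof. by []. Qed.

Lemma inc_x1 e : incident ends (inl false) e ->
  e = e0 \/ exists i (j : 'I_(q i)), e = ed j /\ (j : nat) = 0.
Proof.
case: e => [[]|[i j]]; first by left.
rewrite (inc_ed _ j) => /orP[] /eqP h; right; exists i, j; split=> //.
  have hj := ltn_ord j.
  by case: (pv_cases (ltnW hj)) h => [e|e|[o e]]; rewrite e ?pv0 ?pvq ?pv_mid //; lia.
have hj := ltn_ord j.
by case: (pv_cases hj) h => [e|e|[o e]]; rewrite e ?pv0 ?pvq ?pv_mid //; lia.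
Qed.

Lemma inc_x2 e : incident ends (inl true) e ->
  e = e0 \/ exists i (j : 'I_(q i)), e = ed j /\ (j : nat).+1 = q i.
Proof.
case: e => [[]|[i j]]; first by left.
rewrite (inc_ed _ j) => /orP[] /eqP h; right; exists i, j; split=> //.
  have hj := ltn_ord j.
  by case: (pv_cases (ltnW hj)) h => [e|e|[o e]]; rewrite e ?pv0 ?pvq ?pv_mid //; lia.
have hj := ltn_ord j.
by case: (pv_cases hj) h => [e|e|[o e]]; rewrite e ?pv0 ?pvq ?pv_mid //; lia.
Qed.

Lemma inc_vx k (o : 'I_(q k).-1) e : incident ends (vx o) e ->
  exists j : 'I_(q k), e = ed j /\ ((j : nat) = o \/ (j : nat) = o.+1).
Proof.
case: e => [[]|[i j]]; first by rewrite /incident /= => /eqP.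
rewrite (inc_ed _ j) => /orP[] /eqP h.
  have hj := ltn_ord j.
  case: (pv_cases (ltnW hj)) h => [e|e|[o' e]]; rewrite e ?pv0 ?pvq ?pv_mid //.
  case/vx_inj=> ii oo; subst k; exists j; split=> //; right; lia.
have hj := ltn_ord j.
case: (pv_cases hj) h => [e|e|[o' e]]; rewrite e ?pv0 ?pvq ?pv_mid //.
case/vx_inj=> ii oo; subst k; exists j; split=> //; left; lia.
Qed.

Definition sE (i : 'I_r) : E := ed (Ordinal (ltnW (q2 i))).
Lemma ltn_pred' n : 0 < n -> n.-1 < n. Proof. by case: n. Qed.
Definition tE (i : 'I_r) : E := ed (Ordinal (ltn_pred' (ltnW (q2 i)))).

Lemma sE_inj : injective sE.
Proof. by move=> i i' /eqP; rewrite ed_eq /= andbT => /eqP. Qed.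
Lemma tE_inj : injective tE.
Proof. by move=> i i' /eqP; rewrite ed_eq /= => /andP[/eqP]. Qed.

Lemma deg_x1 : degree ends (inl false) = r.+1.
Proof.
rewrite /degree.
have -> : [set e | incident ends (inl false) e] = e0 |: [set sE i | i in 'I_r].
  apply/setP=> e; rewrite !inE.
  apply/idP/idP.
    case/inc_x1=> [->|[i [j [-> hj]]]]; first by rewrite eqxx.
    apply/orP; right; apply/imsetP; exists i => //.
    by apply/eqP; rewrite ed_eq eqxx /= hj.
  case/orP=> [/eqP->|/imsetP[i _ ->]]; first by [].
  by rewrite /sE inc_ed.
rewrite cardsU1 card_imset; last exact: sE_inj.
have -> : e0 \in [set sE i | i in 'I_r] = false.
  by apply/negbTE/imsetP=> [][i _].
by rewrite card_ord.
Qed.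

Lemma deg_x2 : degree ends (inl true) = r.+1.
Proof.
rewrite /degree.
have -> : [set e | incident ends (inl true) e] = e0 |: [set tE i | i in 'I_r].
  apply/setP=> e; rewrite !inE.
  apply/idP/idP.
    case/inc_x2=> [->|[i [j [-> hj]]]]; first by rewrite eqxx.
    apply/orP; right; apply/imsetP; exists i => //.
    apply/eqP; rewrite ed_eq eqxx /=; apply/eqP; lia.
  case/orP=> [/eqP->|/imsetP[i _ ->]]; first by [].
  rewrite inc_ed /=.
  have -> : ((q i).-1).+1 = q i by have := q2 i; lia.
  by rewrite pvq eqxx orbT.
rewrite cardsU1 card_imset; last exact: tE_inj.
have -> : e0 \in [set tE i | i in 'I_r] = false.
  by apply/negbTE/imsetP=> [][i _].
by rewrite card_ord.
Qed.

Lemma deg_vx k (o : 'I_(q k).-1) : degree ends (vx o) = 2.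
Proof.
rewrite /degree.
have h1 : o < q k by have := ltn_ord o; lia.
have h2 : o.+1 < q k by have := ltn_ord o; lia.
have -> : [set e | incident ends (vx o) e] = [set ed (Ordinal h1); ed (Ordinal h2)].
  apply/setP=> e; rewrite !inE.
  apply/idP/idP.
    case/inc_vx=> j [-> [hj|hj]].
      by apply/orP; left; rewrite ed_eq eqxx /= hj.
    by apply/orP; right; rewrite ed_eq eqxx /= hj.
  case/orP=> /eqP->; rewrite inc_ed /=.
    by rewrite pv_mid eqxx orbT.
  by rewrite pv_mid eqxx.
by rewrite cards2 ed_eq eqxx /=; case: eqP => //; lia.
Qed.

Lemma deg_pv i a : a <= q i ->
  degree ends (pv i a) = if (a == 0) || (a == q i) then r.+1 else 2.
Proof.
move=> ha; case: (pv_cases ha) => [->|->|[o ->]].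
- by rewrite pv0 deg_x1.
- by rewrite pvq deg_x2 eqxx orbT.
- rewrite pv_mid deg_vx; have := ltn_ord o; case: ifP => //; lia.
Qed.

Definition nbr (e : E) : {set E} := [set w | adj e w].

Lemma nbr_le e :
  #|nbr e| <= (degree ends (ends e).1).-1 + (degree ends (ends e).2).-1.
Proof.
set A := [set w | incident ends (ends e).1 w].
set B := [set w | incident ends (ends e).2 w].
have eA : e \in A by rewrite inE /incident eqxx.
have eB : e \in B by rewrite inE /incident eqxx orbT.
have sub : nbr e \subset (A :\ e) :|: (B :\ e).
  apply/subsetP=> w; rewrite !inE /line_adj => /andP[ne /existsP[z /andP[hz hw]]].
  rewrite eq_sym ne /=.
  by case/orP: hz => /eqP hz; subst z; rewrite hw ?orbT.
apply: (leq_trans (subset_leq_card sub)); apply: (leq_trans (leq_card_setU _ _)).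
rewrite /degree -/A -/B (cardsD1 e A) (cardsD1 e B) eA eB.
by [].
Qed.

Lemma nbr_ed i (j : 'I_(q i)) :
  #|nbr (ed j)| <= if ((j : nat) == 0) || ((j : nat).+1 == q i) then r.+1 else 2.
Proof.
apply: (leq_trans (nbr_le _)); rewrite ends_ed /=.
have hj := ltn_ord j; have hq := q2 i.
rewrite (deg_pv (ltnW hj)) (deg_pv hj).
case: (eqVneq (j : nat) 0) => [e|n0].
  rewrite e /=; have -> : (1 == q i) = false by apply/eqP; lia.
  by rewrite ?addn1.
case: (eqVneq (j : nat).+1 (q i)) => [e1|nq].
  rewrite ?orbT /=; have -> : ((j : nat) == q i) = false by apply/eqP; lia.
  by rewrite ?addn1 ?e1.
rewrite /=; have -> : ((j : nat) == q i) = false by apply/eqP; lia.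
by [].
Qed.


Lemma out_le_nbr (D : rel E) u : (forall w, D u w -> adj u w) -> outdeg D u <= #|nbr u|.
Proof.
move=> h; apply: subset_leq_card; apply/subsetP=> w; rewrite !inE; exact: h.
Qed.

Lemma out_lt_nbr (D : rel E) u w0 : (forall w, D u w -> adj u w) ->
  adj u w0 -> ~~ D u w0 -> outdeg D u < #|nbr u|.
Proof.
move=> h a0 n0; apply: proper_card; rewrite properE; apply/andP; split.
  apply/subsetP=> w; rewrite !inE; exact: h.
apply/subsetPn; exists w0; by rewrite !inE.
Qed.

Section Design.
Variables (hc : bool) (c d : 'I_r) (rho : E -> nat).

Definition incyc (e : E) : bool :=
  if e is inr x then hc && ((tag x == c) || (tag x == d)) else false.
Definition ci (e : E) : nat :=
  if e is inr x then (if tag x == c then val (tagged x) else q c + ((q d).-1 - val (tagged x)))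
  else 0.
Definition cfw (u w : E) : bool :=
  (ci w == (ci u).+1) || ((ci w == 0) && ((ci u).+1 == q c + q d)).
Definition Dg (u w : E) : bool :=
  adj u w && (if incyc u && incyc w then cfw u w else rho w < rho u).

Lemma incyc_ed i (j : 'I_(q i)) : incyc (ed j) = hc && ((i == c) || (i == d)).
Proof. by []. Qed.
Lemma ci_ed i (j : 'I_(q i)) : ci (ed j) = if i == c then (j : nat) else q c + ((q d).-1 - j).
Proof. by []. Qed.

Lemma ci_lt u : incyc u -> ci u < q c + q d.
Proof.
case: u => [//|[i j]] /= /andP[_ /orP[] /eqP e]; subst i.
  rewrite eqxx; have := ltn_ord j; lia.
case: eqP => [e|_]; have := ltn_ord j; have := q2 d; try lia.
Qed.

Lemma cfw_col u w : incyc u -> cfw u w -> odd (ci w) != odd (ci u).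
Proof.
move=> cu h; have lt := ci_lt cu; have ec := qe c; have edd := qe d.
move: h; rewrite /cfw; case/orP=> [/eqP->|/andP[/eqP-> /eqP e]].
  by rewrite oddS; case: odd.
have : odd (ci u).+1 = odd (q c + q d) by rewrite e.
move: ec edd; rewrite oddS oddD /=.
by case: (odd (q c)); case: (odd (q d)); case: (odd (ci u)).
Qed.

Hypothesis cd : hc -> c != d.

Lemma cyc_adj u w : incyc u -> incyc w -> adj u w -> cfw u w || cfw w u.
Proof.
case: u => [//|[i j]]; case: w => [//|[i' j']].
rewrite -/(ed j) -/(ed j') !incyc_ed adj_ed /cfw !ci_ed /adjP.
case/andP=> hh hi; case/andP=> _ hi'.
have ne := cd hh.
have hj := ltn_ord j; have hj' := ltn_ord j'; have qc := q2 c; have qd := q2 d.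
have ne' : (d == c) = false by rewrite eq_sym; apply/negbTE.
case/orP: hi => /eqP e; subst i; case/orP: hi' => /eqP e; subst i';
  rewrite ?eqxx ?(negbTE ne) ?ne' /=; lia.
Qed.

Lemma Dg_orient :
  (forall u w, adj u w -> ~~ (incyc u && incyc w) -> rho u != rho w) ->
  is_orientation adj Dg.
Proof.
move=> Rinj; split=> u w; first by case/andP.
move=> a; have a' : adj w u by rewrite adj_sym.
rewrite /Dg a a' /=.
case: (boolP (incyc u && incyc w)) => [/andP[cu cw]|nc].
  by rewrite cw cu /=; exact: cyc_adj.
have -> : (incyc w && incyc u) = false by apply/negbTE; rewrite andbC.
by rewrite -neq_ltn eq_sym Rinj.
Qed.

Lemma Dg_kp :
  (forall u w, incyc u -> incyc w -> rho u = rho w) -> kernel_perfect Dg.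
Proof.
move=> Rc; apply: (@kp_rank _ _ rho (fun e => odd (ci e))) => u w /andP[_].
case: (boolP (incyc u && incyc w)) => [/andP[cu cw] h|_ h]; last by left.
by right; split; [apply: Rc|apply: cfw_col].
Qed.

Lemma Dg_adj u w : Dg u w -> adj u w.
Proof. by case/andP. Qed.

End Design.


Lemma lex_neq a b x y M : x < M -> y < M -> a != b -> a * M + x != b * M + y.
Proof.
move=> hx hy ne; apply/eqP=> e.
have := congr1 (fun n => n %/ M) e; rewrite !divnMDl ?divn_small //; try lia.
Qed.

Definition M := \max_(i < r) q i.
Lemma qM i : q i <= M. Proof. exact: (leq_bigmax i). Qed.

Lemma cyc_pred (hc : bool) (c d : 'I_r) (rho : E -> nat) (cd : c != d) i (j : 'I_(q i)) :
  hc -> (i == c) || (i == d) -> ((j : nat) == 0) || ((j : nat).+1 == q i) ->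
  exists w0, adj (ed j) w0 && ~~ Dg hc c d rho (ed j) w0.
Proof.
move=> hh hi hj0.
have qc := q2 c; have qd := q2 d; have ltj := ltn_ord j.
have ne' : (d == c) = false by rewrite eq_sym; apply/negbTE.
have Hc : incyc hc c d (ed j) by rewrite incyc_ed hh hi.
case/orP: hi => /eqP e; subst i.
- case/orP: hj0 => /eqP hj.
  +
    exists (sE d); rewrite /Dg negb_and adj_ed /adjP eq_sym (negbT ne') /= hj eqxx /=.
    rewrite hh ?eqxx ?orbT /= /cfw !ci_ed eqxx ne' /= hj.
    apply/negP; lia.
  + have h : (j : nat).-1 < q c by lia.
    exists (ed (Ordinal h)); rewrite /Dg negb_and adj_ed /adjP eqxx /=.
    rewrite hh ?eqxx ?orbT /= /cfw !ci_ed eqxx /=.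
    apply/andP; split; [lia|apply/negP; lia].
- case/orP: hj0 => /eqP hj.
  + have h : 1 < q d by lia.
    exists (ed (Ordinal h)); rewrite /Dg negb_and adj_ed /adjP eqxx /=.
    rewrite hh ?eqxx ?orbT /= /cfw !ci_ed ne' /=.
    apply/andP; split; [lia|apply/negP; lia].
  + exists (tE c); rewrite /Dg negb_and adj_ed /adjP ne' /=.
    rewrite hh ?eqxx ?orbT /= /cfw !ci_ed eqxx ne' /=.
    apply/andP; split; [lia|apply/negP; lia].
Qed.

Section CaseX.
Variable dir : bool.
Variables (c d : 'I_r).
Hypothesis cd : 1 < r -> c != d.
Hypothesis r0 : 0 < r.

Definition posX (i : 'I_r) (j : nat) := if dir then j else (q i).-1 - j.
Definition HX := (r * M).+1.
Definition rhoX (e : E) : nat :=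
  if incyc (1 < r) c d e then HX
  else if e is inr x then (tag x * M + posX (tag x) (tagged x)).+1 else 0.
Definition DX := Dg (1 < r) c d rhoX.

Lemma rhoX_ed i (j : 'I_(q i)) :
  rhoX (ed j) = if (1 < r) && ((i == c) || (i == d)) then HX else (i * M + posX i j).+1.
Proof. by []. Qed.

Lemma posX_lt i (j : 'I_(q i)) : posX i j < M.
Proof.
have := qM i; have := ltn_ord j; rewrite /posX; case: dir; lia.
Qed.

Lemma rhoX_lt i (j : 'I_(q i)) : (i * M + posX i j).+1 < HX.
Proof.
have := posX_lt j; have := ltn_ord i; rewrite /HX => h1 h2.
have : i * M + M <= r * M by rewrite addnC -mulSn leq_mul2r h1 orbT.
lia.
Qed.

Lemma X_inj u w : adj u w -> ~~ (incyc (1 < r) c d u && incyc (1 < r) c d w) ->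
  rhoX u != rhoX w.
Proof.
case: u => [[]|[i j]]; case: w => [[]|[i' j']]; rewrite -?/(ed j) -?/(ed j') -/e0.
- by rewrite adj_e00.
- by move=> _ _; rewrite rhoX_ed /rhoX /=; case: ifP.
- by move=> _ _; rewrite rhoX_ed /rhoX /=; case: ifP.
rewrite adj_ed /adjP !incyc_ed !rhoX_ed => a nc.
have l1 := rhoX_lt j; have l2 := rhoX_lt j'.
case: ifP nc => c1; case: ifP => c2 //= _; try (apply/eqP; lia).
have p1 := posX_lt j; have p2 := posX_lt j'.
case: (eqVneq i i') a => [e|ne] /= a.
  subst i'; move: a; rewrite ?eqxx /= => a.
  have hj := ltn_ord j; have hj' := ltn_ord j'.
  rewrite eqSS /posX; case: dir; apply/eqP; lia.
by rewrite eqSS lex_neq.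
Qed.

Lemma DX_orient : is_orientation adj DX.
Proof.
apply: Dg_orient; first exact: cd.
exact: X_inj.
Qed.

Lemma DX_kp : kernel_perfect DX.
Proof.
apply: Dg_kp => u w cu cw; by rewrite /rhoX cu cw.
Qed.

Lemma DX_e0 : outdeg DX e0 = 0.
Proof.
apply/eqP; rewrite cards_eq0; apply/eqP/setP=> w; rewrite !inE /DX /Dg /=.
by rewrite andbF.
Qed.

Lemma DX_clique i (j : 'I_(q i)) : 1 < r ->
  ((j : nat) == 0) || ((j : nat).+1 == q i) -> outdeg DX (ed j) <= r.
Proof.
move=> r1 hj0.
have hn := nbr_ed j; rewrite hj0 in hn.
suff [w0 /andP[a n]] : exists w0, adj (ed j) w0 && ~~ DX (ed j) w0.
  have := @out_lt_nbr DX _ _ (fun w => @Dg_adj _ _ _ _ _ w) a n; lia.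
case: (boolP ((i == c) || (i == d))) => hi.
  exact: (@cyc_pred (1 < r) c d rhoX (cd r1) i j r1 hi hj0).
have ic : (i == c) = false by apply/negbTE; move: hi; rewrite negb_or => /andP[].
case/orP: hj0 => /eqP hj.
- exists (sE c); rewrite adj_ed /adjP ic /= hj eqxx /=.
  rewrite /DX /Dg negb_and adj_ed /adjP ic /= hj eqxx /=.
  rewrite (negbTE hi) andbF /= !rhoX_ed r1 eqxx /= (negbTE hi).
  by rewrite -leqNgt ltnW // rhoX_lt.
- exists (tE c); rewrite adj_ed /adjP ic /= hj eqxx /=.
  have -> : ((q c).-1.+1 == q c) by have := q2 c; lia.
  rewrite /DX /Dg negb_and adj_ed /adjP ic /= hj eqxx /=.
  have -> : ((q c).-1.+1 == q c) by have := q2 c; lia.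
  rewrite (negbTE hi) andbF /= !rhoX_ed r1 eqxx /= (negbTE hi).
  by rewrite !orbT /= -leqNgt ltnW // rhoX_lt.
Qed.

Lemma DX_near1 i (j : 'I_(q i)) : r = 1 -> posX i j = 0 -> outdeg DX (ed j) <= 1.
Proof.
move=> r1 hp.
have hq := q2 i; have hj := ltn_ord j.
have hn := nbr_ed j.
have hc : ((j : nat) == 0) || ((j : nat).+1 == q i).
  by move: hp; rewrite /posX; case: dir; lia.
rewrite hc in hn.
have nc : (1 < r) = false by apply/negbTE; lia.
pose n1 := if dir then 1 else (q i).-2.
have h1 : n1 < q i by rewrite /n1; case: dir; lia.
have a : adj (ed j) (ed (Ordinal h1)).
  rewrite adj_ed /adjP eqxx /= /n1; move: hp; rewrite /posX; case: dir => /=; lia.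
have n : ~~ DX (ed j) (ed (Ordinal h1)).
  rewrite /DX /Dg a !incyc_ed nc /= !rhoX_ed nc /=.
  rewrite -leqNgt ltnS leq_add2l /posX /n1 /=.
  move: hp; rewrite /posX; case: dir => /=; lia.
have := @out_lt_nbr DX _ _ (fun w => @Dg_adj _ _ _ _ _ w) a n; lia.
Qed.

Lemma DX_gen e : outdeg DX e <= #|nbr e|.
Proof. exact: out_le_nbr (fun w => @Dg_adj _ _ _ _ _ w). Qed.

End CaseX.

Section CaseI.
Variables (k : 'I_r) (o : 'I_(q k).-1).
Variables (c d : 'I_r).
Hypothesis cdI : 2 < r -> [&& c != d, c != k & d != k].

Definition B0 := 2 * M.
Definition HI := (B0 + r * M).+1.
Definition rhoI (e : E) : nat :=
  if incyc (2 < r) c d e then HI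
  else if e is inr x then
    (if tag x == k then (if val (tagged x) <= o then (2 * (o - tagged x)).+1
                         else 2 * (tagged x - o.+1))
     else (B0 + tag x * M + tagged x).+1)
  else B0.
Definition DI := Dg (2 < r) c d rhoI.

Lemma rhoI_ed i (j : 'I_(q i)) :
  rhoI (ed j) = if (2 < r) && ((i == c) || (i == d)) then HI
    else if i == k then (if (j : nat) <= o then (2 * (o - j)).+1 else 2 * (j - o.+1))
    else (B0 + i * M + j).+1.
Proof. by []. Qed.

Lemma kcyc : ((2 < r) && ((k == c) || (k == d))) = false.
Proof.
case: (ltnP 2 r) => // h; have := cdI h; case/and3P=> _ h1 h2.
by rewrite eq_sym (negbTE h1) eq_sym (negbTE h2).
Qed.

Lemma rhoI_k (j : 'I_(q k)) :
  rhoI (ed j) = if (j : nat) <= o then (2 * (o - j)).+1 else 2 * (j - o.+1).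
Proof. by rewrite rhoI_ed kcyc eqxx. Qed.

Lemma rhoI_k_lt (j : 'I_(q k)) : rhoI (ed j) < B0.
Proof.
rewrite rhoI_k /B0; have := qM k; have := ltn_ord j; have := ltn_ord o.
case: ifP; lia.
Qed.

Lemma rhoI_oth i (j : 'I_(q i)) : i != k -> ~~ ((2 < r) && ((i == c) || (i == d))) ->
  B0 < rhoI (ed j) < HI.
Proof.
move=> ik nc; rewrite rhoI_ed (negbTE nc) (negbTE ik) /HI.
have := qM i; have := ltn_ord j; have := ltn_ord i => h1 h2 h3.
have : i * M + M <= r * M by rewrite addnC -mulSn leq_mul2r h1 orbT.
lia.
Qed.

Lemma I_inj u w : adj u w -> ~~ (incyc (2 < r) c d u && incyc (2 < r) c d w) ->
  rhoI u != rhoI w.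
Proof.
have hB : B0 < HI by rewrite /HI; lia.
case: u => [[]|[i j]]; case: w => [[]|[i' j']]; rewrite -?/(ed j) -?/(ed j') -/e0.
- by rewrite adj_e00.
- move=> _ _; rewrite [rhoI e0]/rhoI /=.
  case: (eqVneq i' k) => [e|ne]; first by subst i'; have := rhoI_k_lt j'; lia.
  case: (boolP ((2 < r) && ((i' == c) || (i' == d)))) => cy.
    by rewrite rhoI_ed cy; lia.
  by have := rhoI_oth j' ne cy; lia.
- move=> _ _; rewrite [rhoI e0]/rhoI /=.
  case: (eqVneq i k) => [e|ne]; first by subst i; have := rhoI_k_lt j; lia.
  case: (boolP ((2 < r) && ((i == c) || (i == d)))) => cy.
    by rewrite rhoI_ed cy; lia.
  by have := rhoI_oth j ne cy; lia.
rewrite adj_ed /adjP !incyc_ed => a nc.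
case: (boolP ((2 < r) && ((i == c) || (i == d)))) nc => c1;
  case: (boolP ((2 < r) && ((i' == c) || (i' == d)))) => c2 //= _.
- rewrite [rhoI (ed j)]rhoI_ed c1.
  case: (eqVneq i' k) => [e|ne]; first by subst i'; have := rhoI_k_lt j'; lia.
  by have := rhoI_oth j' ne c2; lia.
- rewrite [rhoI (ed j')]rhoI_ed c2.
  case: (eqVneq i k) => [e|ne]; first by subst i; have := rhoI_k_lt j; lia.
  by have := rhoI_oth j ne c1; lia.
case: (eqVneq i k) => [e|ne]; case: (eqVneq i' k) => [e'|ne'].
- subst i i'; rewrite !rhoI_k; move: a; rewrite eqxx /= => a.
  case: ifP; case: ifP; lia.
- subst i; have := rhoI_k_lt j; have := rhoI_oth j' ne' c2; lia.
- subst i'; have := rhoI_k_lt j'; have := rhoI_oth j ne c1; lia.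
rewrite !rhoI_ed (negbTE c1) (negbTE c2) (negbTE ne) (negbTE ne') eqSS.
case: (eqVneq i i') a => [e|ne2] /= a.
  subst i'; move: a; rewrite ?eqxx /= => a; apply/eqP; lia.
rewrite -!addnA ?add0n !eqn_add2l; apply: lex_neq => //.
- exact: leq_trans (ltn_ord j) (qM i).
- exact: leq_trans (ltn_ord j') (qM i').
Qed.

Lemma DI_orient : is_orientation adj DI.
Proof.
apply: Dg_orient; last exact: I_inj.
by move=> h; case/and3P: (cdI h).
Qed.

Lemma DI_kp : kernel_perfect DI.
Proof.
apply: Dg_kp => u w cu cw; by rewrite /rhoI cu cw.
Qed.

Let ha : (o : nat) < q k. Proof. have := ltn_ord o; lia. Qed.
Let hb : (o : nat).+1 < q k. Proof. have := ltn_ord o; lia. Qed.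
Definition aI : E := ed (Ordinal ha).
Definition bI : E := ed (Ordinal hb).

Lemma kI_not_cyc (j : 'I_(q k)) : incyc (2 < r) c d (ed j) = false.
Proof. by rewrite incyc_ed kcyc. Qed.

Lemma DI_b : outdeg DI bI = 0.
Proof.
apply/eqP; rewrite cards_eq0; apply/eqP/setP=> w; rewrite !inE /DI /Dg.
rewrite kI_not_cyc /= [rhoI bI]rhoI_k /=.
have -> : (o.+1 <= o) = false by rewrite ltnn.
by rewrite subnn ltn0 andbF.
Qed.

Lemma DI_a : outdeg DI aI <= 1.
Proof.
rewrite -(cards1 bI); apply: subset_leq_card; apply/subsetP=> w.
rewrite !inE /DI /Dg kI_not_cyc /= [rhoI aI]rhoI_k /= leqnn subnn /=.
case/andP=> _; rewrite ltnS leqn0 => /eqP h.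
case: w h => [[]|[i j]]; rewrite -?/(ed j) -/e0.
  by rewrite /rhoI /= /B0; have := qM k; have := q2 k; lia.
case: (eqVneq i k) => [e|ne].
  subst i; rewrite rhoI_k; case: ifP => // hj h.
  by rewrite /bI ed_eq eqxx /=; apply/eqP; lia.
case: (boolP ((2 < r) && ((i == c) || (i == d)))) => cy.
  by rewrite rhoI_ed cy.
by have := rhoI_oth j ne cy; lia.
Qed.

Lemma DI_e0 : outdeg DI e0 <= 2.
Proof.
apply: (@leq_trans #|[set sE k; tE k]|); last by rewrite cards2; case: eqP.
apply: subset_leq_card; apply/subsetP=> w.
rewrite !inE /DI /Dg /= => /andP[].
case: w => [[]|[i j]]; rewrite -?/(ed j) -/e0; first by rewrite adj_e00.
rewrite adj_e0 => hj.
rewrite [rhoI e0]/rhoI /= => hr.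
case: (eqVneq i k) => [e|ne].
  subst i; case/orP: hj => /eqP hj.
    by apply/orP; left; rewrite /sE ed_eq eqxx /= hj.
  by apply/orP; right; rewrite /tE ed_eq eqxx /=; apply/eqP; lia.
case: (boolP ((2 < r) && ((i == c) || (i == d)))) => cy.
  by move: hr; rewrite rhoI_ed cy /HI; lia.
by have := rhoI_oth j ne cy; lia.
Qed.

Lemma DI_clique i (j : 'I_(q i)) : 2 < r ->
  ((j : nat) == 0) || ((j : nat).+1 == q i) -> outdeg DI (ed j) <= r.
Proof.
move=> r2 hj0.
have hn := nbr_ed j; rewrite hj0 in hn.
suff [w0 /andP[a n]] : exists w0, adj (ed j) w0 && ~~ DI (ed j) w0.
  have := @out_lt_nbr DI _ _ (fun w => @Dg_adj _ _ _ _ _ w) a n; lia.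
case/and3P: (cdI r2) => cd1 ck dk.
case: (eqVneq i k) => [e|ne].
  subst i; exists e0; rewrite adj_e0' hj0 /= /DI /Dg adj_e0' hj0 kI_not_cyc /=.
  by rewrite -leqNgt ltnW // rhoI_k_lt.
case: (boolP ((i == c) || (i == d))) => hi.
  exact: (@cyc_pred (2 < r) c d rhoI cd1 i j r2 hi hj0).
have ic : (i == c) = false by apply/negbTE; move: hi; rewrite negb_or => /andP[].
have cy : ~~ ((2 < r) && ((i == c) || (i == d))) by rewrite (negbTE hi) andbF.
have ccy : incyc (2 < r) c d (ed j) = false by rewrite incyc_ed (negbTE hi) andbF.
have hl := rhoI_oth j ne cy.
case/orP: hj0 => /eqP hj.
- exists (sE c); rewrite adj_ed /adjP ic /= hj eqxx /=.
  rewrite /DI /Dg adj_ed /adjP ic /= hj eqxx /= (negbTE hi) andbF /=.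
  rewrite [rhoI (sE c)]rhoI_ed r2 eqxx /=; lia.
- exists (tE c); rewrite adj_ed /adjP ic /= hj eqxx /=.
  have -> : ((q c).-1.+1 == q c) by have := q2 c; lia.
  rewrite /DI /Dg adj_ed /adjP ic /= hj eqxx /= (negbTE hi) andbF /=.
  have -> : ((q c).-1.+1 == q c) by have := q2 c; lia.
  rewrite [rhoI (tE c)]rhoI_ed r2 eqxx /= !orbT /=; lia.
Qed.

Lemma DI_gen e : outdeg DI e <= #|nbr e|.
Proof. exact: out_le_nbr (fun w => @Dg_adj _ _ _ _ _ w). Qed.

End CaseI.

Lemma caseX_main (b : bool) p : 0 < r -> 4 <= p -> r < p ->
  f_edge_orientable ends (f_kv ends p (inl b)).
Proof.
move=> r0 p4 pr.
have [c [d cd]] : exists c d : 'I_r, 1 < r -> c != d.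
  case: (ltnP 1 r) => h.
    by exists (Ordinal r0), (Ordinal h) => _; rewrite -val_eqE.
  by exists (Ordinal r0), (Ordinal r0) => h'; lia.
have degb : degree ends (inl b) = r.+1 by case: b; [exact: deg_x2|exact: deg_x1].
exists (DX (~~ b) c d); split; [exact: DX_orient|exact: DX_kp|].
move=> e; rewrite /f_kv degb.
case: e => [[]|[i j]]; rewrite -?/(ed j) -/e0.
  by rewrite DX_e0; case: ifP => _; lia.
have hn := nbr_ed j.
have hg := DX_gen (~~ b) c d (ed j).
have hj := ltn_ord j; have hqi := q2 i.
case: ifP => inc.
  have hpos : posX (~~ b) i j = 0.
    move: inc; case: b {degb hg} => /= inc.
      case/inc_x2: inc => [//|[i' [j' [/eqP e h]]]].
      move: e; rewrite ed_eq => /andP[/eqP ii /eqP jj]; subst i'.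
      rewrite /posX /=; lia.
    case/inc_x1: inc => [//|[i' [j' [/eqP e h]]]].
    move: e; rewrite ed_eq => /andP[/eqP ii /eqP jj]; subst i'.
    rewrite /posX /=; lia.
  case: (ltnP 1 r) => r1.
    have hc : ((j : nat) == 0) || ((j : nat).+1 == q i).
      by move: hpos; rewrite /posX; case: b {degb hg inc} => /=; lia.
    by have := DX_clique (~~ b) cd r0 r1 hc; lia.
  have r1' : r = 1 by lia.
  by have := @DX_near1 (~~ b) c d cd r0 i j r1' hpos; lia.
case: (boolP (((j : nat) == 0) || ((j : nat).+1 == q i))) => hc.
  case: (ltnP 1 r) => r1.
    by have := DX_clique (~~ b) cd r0 r1 hc; lia.
  by rewrite hc in hn; lia.
by rewrite (negbTE hc) in hn; lia.
Qed.

Lemma caseI_main k (o : 'I_(q k).-1) p : 4 <= p -> r < p ->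
  f_edge_orientable ends (f_kv ends p (vx o)).
Proof.
move=> p4 pr.
have [c [d cdI]] : exists c d : 'I_r, 2 < r -> [&& c != d, c != k & d != k].
  case: (ltnP 2 r) => h; last by exists k, k => h'; lia.
  have h0 : 0 < r by lia. have h1 : 1 < r by lia.
  case: (eqVneq (k : nat) 0) => k0.
    by exists (Ordinal h1), (Ordinal h) => _; rewrite -!val_eqE /=; lia.
  case: (eqVneq (k : nat) 1) => k1.
    by exists (Ordinal h0), (Ordinal h) => _; rewrite -!val_eqE /=; lia.
  by exists (Ordinal h0), (Ordinal h1) => _; rewrite -!val_eqE /=; lia.
exists (DI o c d); split; [exact: (DI_orient o cdI)|exact: (DI_kp o c d)|].
move=> e; rewrite /f_kv deg_vx.
case: ifP => inc.
  case/inc_vx: inc => j [-> [hj|hj]].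
    have -> : ed j = aI o cdI by apply/eqP; rewrite /aI ed_eq eqxx /= hj.
    by have := DI_a o cdI; lia.
  have -> : ed j = bI o cdI by apply/eqP; rewrite /bI ed_eq eqxx /= hj.
  by rewrite (DI_b o cdI).
case: e inc => [[]|[i j]]; rewrite -?/(ed j) -/e0 => _.
  by have := DI_e0 o cdI; lia.
have hn := nbr_ed j.
have hg := DI_gen o c d (ed j).
case: (boolP (((j : nat) == 0) || ((j : nat).+1 == q i))) => hc.
  case: (ltnP 2 r) => r2.
    by have := DI_clique o cdI r2 hc; lia.
  by rewrite hc in hn; lia.
by rewrite (negbTE hc) in hn; lia.
Qed.

End Theta.

Theorem mainTheorem15 (r : nat) (q : 'I_r -> nat) (p : nat) :
  0 < r ->
  (forall i : 'I_r, 0 < q i /\ ~~ odd (q i)) ->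
  (forall i j : 'I_r, i <= j -> q i <= q j) ->
  maxn 4 (maxdeg (theta_ends q)) <= p ->
  strongly_edge_orientable (theta_ends q) p.
Proof.
move=> r0 hq _ hp v.
have q2 : forall i, 1 < q i.
  move=> i; case: (hq i) => h1 h2; move: h1 h2; case: (q i) => [|[|n]] //.
have qe : forall i, ~~ odd (q i) by move=> i; case: (hq i).
have hmd : r.+1 <= maxdeg (theta_ends q).
  rewrite -(deg_x1 q2); exact: (leq_bigmax (inl false : theta_vert q)).
have p4 : 4 <= p by move: hp; rewrite geq_max => /andP[].
have pr : r < p by move: hp; rewrite geq_max => /andP[_]; exact: leq_trans.
case: v => [b|[k o]].
  exact: caseX_main.
exact: (caseI_main q2 qe o p4 pr).
Qed.
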